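(* Let $\lambda \geq 2$ be an integer. Then there exists a positive integer $p''(\lambda)$ such that, with $p = p''(\lambda)$, each of the following three graphs has smallest adjacency eigenvalue less than $-\lambda$: (i) the graph consisting of $\lambda+1$ pairwise disjoint and mutually non-adjacent cliques $K_p$ together with one extra vertex adjacent to all vertices of these cliques; (ii) the graph consisting of two adjacent vertices $s$ and $s'$ and $\lambda+1$ pairwise disjoint, mutually non-adjacent cliques $Q_1,\dots,Q_{\lambda+1}$, each a $K_p$, where $s$ is adjacent to all vertices of $Q_1,\dots,Q_\lambda$ and to none of $Q_{\lambda+1}$, and $s'$ is adjacent to all vertices of $Q_{\lambda+1}$ and to none of $Q_1,\dots,Q_\lambda$; (iii) the graph consisting of a complete graph $K_{n+1}$ with $n = \lambda^2-\lambda+1$, together with a clique $K_p$ on $p$ new vertices, each of which is adjacent to exactly the same $n$ fixed vertices of the $K_{n+1}$ (and not to the remaining vertex).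
   Context: The smallest eigenvalue of a graph refers to the smallest eigenvalue of its adjacency matrix. In the paper these graphs are $G(\mathfrak{h}^{(\lambda+1)},p)$, $G(\mathfrak{h}^{(\lambda,1)},p)$ and $G(\mathfrak{c}_{\lambda^2-\lambda+1},p)$, obtained from Hoffman graphs by replacing each fat vertex by a clique $K_p$ joined to all slim neighbours of that fat vertex. *)

(* Defs.v *)
From HB Require Import structures.
From mathcomp Require Import all_boot all_order all_algebra.
From mathcomp Require Import reals.
Set Implicit Arguments. Unset Strict Implicit. Unset Printing Implicit Defensive.
Import Order.TTheory GRing.Theory Num.Theory.
Local Open Scope ring_scope.

Definition adjmx (R : realType) (T : finType) (e : rel T) : 'M[R]_#|T| :=
  \matrix_(i, j) ((e (enum_val i) (enum_val j))%:R : R).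

Definition is_smallest_eigenvalue (R : realType) (n : nat) (A : 'M[R]_n) (a : R) :=
  eigenvalue A a /\ (forall b : R, eigenvalue A b -> a <= b).

Definition graph1_rel (lam p : nat) : rel (option ('I_lam.+1 * 'I_p)) :=
  fun x y => match x, y with
  | None, Some _ => true
  | Some _, None => true
  | Some (i, a), Some (j, b) => (i == j) && (a != b)
  | None, None => false
  end.

(* (ii) vertices s = inl true, s' = inl false; cliques Q_1..Q_{lam+1} are inr (i, a),
   with i : 'I_lam.+1, Q_{lam+1} being i = lam. *)
Definition graph2_rel (lam p : nat) : rel (bool + ('I_lam.+1 * 'I_p)) :=
  fun x y => match x, y with
  | inl u, inl v => u != v
  | inl true, inr (i, _) | inr (i, _), inl true => (i < lam)%N
  | inl false, inr (i, _) | inr (i, _), inl false => (i == lam :> nat)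
  | inr (i, a), inr (j, b) => (i == j) && (a != b)
  end.

(* (iii) K_{n+1} on 'I_n.+1 and K_p on 'I_p; each new vertex is adjacent to the
   n vertices i < n of K_{n+1} and not to the vertex n. *)
Definition graph3_rel (n p : nat) : rel ('I_n.+1 + 'I_p) :=
  fun x y => match x, y with
  | inl i, inl j => i != j
  | inr a, inr b => a != b
  | inl i, inr _ | inr _, inl i => (i < n)%N
  end.

Arguments graph1_rel : clear implicits.
Arguments graph2_rel : clear implicits.
Arguments graph3_rel : clear implicits.
Arguments adjmx : clear implicits.

(* Main.v *)
Require Import Defs.
From HB Require Import structures.
From mathcomp Require Import all_boot all_order all_algebra.
From mathcomp Require Import reals.
From mathcomp Require Import polyrcf.
Import Order.TTheory GRing.Theory Num.Theory.
Local Open Scope ring_scope.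
From mathcomp Require Import ring lra.

Lemma sum_neq (R : realType) (T : finType) (b : T) :
  \sum_(a : T) ((a != b)%:R : R) = (#|T|.-1)%:R.
Proof.
rewrite (bigD1 b) //= eqxx add0r -(cardC1 b).
rewrite (eq_bigr (fun _ => 1)); last by move=> a ->.
by rewrite sumr_const.
Qed.


Lemma eig_of_fun (R : realType) (T : finType) (e : rel T) (f : T -> R) (th : R) y0 :
  f y0 != 0 ->
  (forall y, \sum_x f x * (e x y)%:R = th * f y) ->
  eigenvalue (adjmx R T e) th.
Proof.
move=> fy0 H; apply/eigenvalueP.
exists (\row_i f (enum_val i)).
  apply/rowP => j; rewrite !mxE.
  rewrite (eq_bigr (fun i => f (enum_val i) * (e (enum_val i) (enum_val j))%:R)); last first.
    by move=> i _; rewrite !mxE.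
  rewrite -(big_enum_val (A := predT) (fun x => f x * (e x (enum_val j))%:R)).
  by rewrite H.
apply/eqP => /rowP /(_ (enum_rank y0)); rewrite !mxE enum_rankK => /eqP.
by rewrite (negPf fy0).
Qed.

Lemma seqmin (R : realType) (y : R) (s : seq R) :
  exists m, m \in y :: s /\ forall x, x \in y :: s -> m <= x.
Proof.
elim: s y => [|z s IH] y.
  by exists y; split => [|x]; rewrite ?inE // => /eqP ->.
have [m [ms mle]] := IH z.
exists (Order.min y m); split.
  rewrite /Order.min; case: ifP => _; first by rewrite inE eqxx.
  by rewrite inE ms orbT.
move=> x; rewrite inE => /orP [/eqP ->|xs]; first by rewrite ge_min lexx.
by rewrite ge_min (mle x xs) orbT.
Qed.

Lemma smallest_ev (R : realType) n (A : 'M[R]_n) t :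
  eigenvalue A t -> exists a, is_smallest_eigenvalue A a /\ a <= t.
Proof.
move=> Ht.
have cp0 : char_poly A != 0 by apply: monic_neq0; apply: char_poly_monic.
have memE x : eigenvalue A x = (x \in rootsR (char_poly A)).
  by rewrite -(roots_on_rootsR cp0) eigenvalue_root_char.
have tin : t \in rootsR (char_poly A) by rewrite -memE.
have [m [ms mle]] := @seqmin _ t (rootsR (char_poly A)).
have mt : m <= t by apply: mle; rewrite inE eqxx.
exists m; split => //; split.
  move: ms; rewrite inE => /orP [/eqP ->//|]; by rewrite memE.
by move=> b; rewrite memE => bin; apply: mle; rewrite inE bin orbT.
Qed.

Lemma sum_option (R : nmodType) (T : finType) (F : option T -> R) :
  \sum_x F x = F None + \sum_x F (Some x).
Proof.
rewrite (bigD1 None) //=. congr (_ + _).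
rewrite (reindex_omap Some id) /=.
  by apply: eq_bigl => x; rewrite eqxx.
by case.
Qed.
Lemma sum_pair (R : nmodType) (I J : finType) (F : I * J -> R) :
  \sum_u F u = \sum_i \sum_j F (i, j).
Proof. by rewrite pair_big; apply: eq_bigr; case. Qed.


Lemma g1 (R : realType) l p th : (0 < p)%N ->
  th * (th - p%:R + 1) = (l.+1 * p)%:R ->
  eigenvalue (adjmx R _ (graph1_rel l p)) th.
Proof.
move=> p0 Hth.
apply: (@eig_of_fun R _ _ (fun x => if x is None then th - p%:R + 1 else 1) th
          (Some (ord0, Ordinal p0))); first by rewrite oner_eq0.
case=> [[j b]|].
  rewrite sum_option sum_pair /= (bigD1 j) //=.
  have -> : \sum_(i < l.+1 | i != j) \sum_(a < p) 1 * ((i == j) && (a != b))%:R = 0 :> R.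
    by apply: big1 => i /negPf ij; apply: big1 => a _; rewrite ij mul1r.
  rewrite addr0 (eq_bigr (fun a => (a != b)%:R)); last by move=> a _; rewrite eqxx mul1r.
  rewrite sum_neq card_ord mulr1 -subn1 natrB //; ring.
rewrite sum_option /= mulr0 add0r (eq_bigr (fun _ => 1)); last by move=> [? ?] _; rewrite /= mul1r.
by rewrite sumr_const card_prod !card_ord Hth.
Qed.


Lemma g2 (R : realType) l p th : (0 < p)%N ->
  let t := th - p%:R + 1 in t != 0 ->
  th * (t * (th * t - p%:R)) = t ^+ 2 + (l * p)%:R * (th * t - p%:R) ->
  eigenvalue (adjmx R _ (graph2_rel l p)) th.
Proof.
move=> p0 t t0 Hth.
pose f (x : bool + ('I_l.+1 * 'I_p)) := match x with
  | inl true => t * (th * t - p%:R) | inl false => t ^+ 2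
  | inr (i, _) => if (i < l)%N then th * t - p%:R else t end.
apply: (@eig_of_fun R _ _ f th (inl false)); first by rewrite /f expf_neq0.
have Hp1 : (p.-1%:R : R) = p%:R - 1 by rewrite -subn1 natrB.
case=> [[]|[j b]].
- rewrite big_sumType /= big_bool /= sum_pair big_ord_recr /=.
  rewrite (eq_bigr (fun _ => p%:R * (th * t - p%:R))); last first.
    move=> i _; rewrite ltn_ord (eq_bigr (fun _ => th * t - p%:R)); last by move=> ? _; rewrite mulr1.
    by rewrite sumr_const card_ord mulr_natl.
  have -> : \sum_(j < p) (if (l < l)%N then th * t - p%:R else t) * (l < l)%:R = 0 :> R.
    by rewrite ltnn big1 // => ? _; rewrite mulr0.
  rewrite sumr_const card_ord Hth natrM -mulr_natl; ring.
- rewrite big_sumType /= big_bool /= sum_pair big_ord_recr /=.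
  rewrite big1; last first.
    move=> i _; apply: big1 => a _. by rewrite ltn_eqF ?mulr0.
  rewrite eqxx (eq_bigr (fun _ => t)); last by move=> ? _; rewrite ltnn mulr1.
  rewrite sumr_const card_ord /f -mulr_natl; ring.
- rewrite big_sumType /= big_bool /= sum_pair /= (bigD1 j) //=.
  have -> : \sum_(i < l.+1 | i != j) \sum_(a < p) (if (i < l)%N then th * t - p%:R else t) * ((i == j) && (a != b))%:R = 0 :> R.
    by apply: big1 => i /negPf ij; apply: big1 => a _; rewrite ij mulr0.
  rewrite addr0 (eq_bigr (fun a => (if (j < l)%N then th * t - p%:R else t) * (a != b)%:R)); last by move=> a _; rewrite eqxx.
  rewrite -mulr_sumr sum_neq card_ord Hp1 /f.
  case: ltnP => jl.
    by rewrite ltn_eqF // mulr1 mulr0 /t; ring.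
  have -> : (j == l :> nat) by rewrite eqn_leq jl andbT -ltnS ltn_ord.
  by rewrite mulr1 mulr0 /t; ring.
Qed.


Lemma sum_off (R : realType) (T : finType) (F : T -> R) i :
  \sum_j F j * (j != i)%:R = \sum_j F j - F i.
Proof.
rewrite (bigD1 i) //= eqxx mulr0 add0r [in RHS](bigD1 i) //= [RHS]addrC addKr.
by apply: eq_bigr => j ->; rewrite mulr1.
Qed.

Lemma g3 (R : realType) n p th : (0 < p)%N -> (0 < n)%N ->
  let t := th - p%:R + 1 in th != 0 ->
  (n%:R - 1) * th * t + n%:R * t + p%:R * n%:R * th = th ^+ 2 * t ->
  eigenvalue (adjmx R _ (graph3_rel n p)) th.
Proof.
move=> p0 n0 t th0 Hth.
pose f (x : 'I_n.+1 + 'I_p) := match x with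
  | inl i => if (i < n)%N then th * t else n%:R * t
  | inr _ => n%:R * th end.
apply: (@eig_of_fun R _ _ f th (inr (Ordinal p0))).
  by rewrite /f mulf_neq0 // pnatr_eq0 -lt0n.
have Hp1 : (p.-1%:R : R) = p%:R - 1 by rewrite -subn1 natrB.
have tot : \sum_(j < n.+1) (if (j < n)%N then th * t else n%:R * t) = n%:R * (th * t) + n%:R * t.
  rewrite big_ord_recr /= ltnn (eq_bigr (fun _ => th * t)); last by move=> j _; rewrite ltn_ord.
  by rewrite sumr_const card_ord -[th * t *+ n]mulr_natl.
case=> [i|b].
- rewrite big_sumType /=.
  rewrite (@sum_off _ _ (fun j : 'I_n.+1 => if (j < n)%N then th * t else n%:R * t)) tot.
  rewrite (eq_bigr (fun _ => n%:R * th * (i < n)%:R)) // sumr_const card_ord.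
  case: ltnP => iN; rewrite ?mulr1 ?mulr0.
    by rewrite -mulr_natl [RHS]mulrA -expr2 -Hth; ring.
  by rewrite mul0rn; ring.
- rewrite big_sumType /= big_ord_recr /= ltnn mulr0 addr0.
  rewrite (eq_bigr (fun _ => th * t)); last by move=> j _ /=; rewrite ltn_ord mulr1.
  have -> : \sum_(i < p) n%:R * th * (i != b)%:R = n%:R * th * (p%:R - 1) :> R.
    by rewrite -mulr_sumr sum_neq card_ord Hp1.
  rewrite sumr_const card_ord -mulr_natl /t; ring.
Qed.


Lemma ivt_lt (R : realType) (q : {poly R}) a b : a <= b -> 0 <= q.[a] -> q.[b] < 0 ->
  exists th, [/\ a <= th, th < b & q.[th] = 0].
Proof.
move=> ab qa qb.
have hq : q.[a] * q.[b] <= 0 by rewrite mulr_ge0_le0 // ltW.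
have [x] := polyrcf.poly_ivt ab hq.
rewrite in_itv /= => /andP [ax xb] /rootP qx.
exists x; split => //; rewrite lt_neqAle xb andbT.
by apply/eqP => xE; move: qb; rewrite -xE qx ltxx.
Qed.

Lemma ivt_gt (R : realType) (q : {poly R}) a b : a <= b -> q.[a] <= 0 -> 0 < q.[b] ->
  exists th, [/\ a <= th, th < b & q.[th] = 0].
Proof.
move=> ab qa qb.
have [x [ax xb qx]] := @ivt_lt R (- q) a b ab ltac:(by rewrite hornerN oppr_ge0) ltac:(by rewrite hornerN oppr_lt0).
by exists x; split => //; apply/eqP; rewrite -oppr_eq0 -hornerN qx.
Qed.


Lemma n1a (R : realType) (L P : R) : 2 <= L -> P = L^+4 ->
  (-L) * (-L - (P - 1)) - (L + 1) * P < 0.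
Proof.
move=> L2 ->.
have e : L^+4 = (L*L)*(L*L) by ring.
have h1 : 4 <= L * L by nra.
have h : 4 * (L*L) <= (L*L)*(L*L) by nra.
rewrite e. nra.
Qed.
Lemma n1b (R : realType) (L P : R) : 2 <= L -> 1 <= P ->
  0 <= (-(L+P+1)) * (-(L+P+1) - (P - 1)) - (L + 1) * P.
Proof. move=> L2 P1. nra. Qed.
Lemma n2a (R : realType) (L P : R) : 2 <= L -> P = L^+4 ->
  (-L) * ((-L - P + 1) * ((-L)*(-L - P + 1) - P)) - (-L - P + 1)^+2 - (L*P) * ((-L)*(-L - P + 1) - P) < 0.
Proof.
move=> L2 PE.
have -> : (-L) * ((-L - P + 1) * ((-L)*(-L - P + 1) - P)) - (-L - P + 1)^+2 - (L*P) * ((-L)*(-L - P + 1) - P) =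
   L * (L-1)^+2 * (L + P) - (L + P - 1)^+2.
  ring.
have c3 : L * (L-1)^+2 < L^+3.
  rewrite -subr_gt0; have -> : L^+3 - L * (L-1)^+2 = L*(2*L - 1) by ring.
  by apply: mulr_gt0; lra.
have e1 : L * (L-1)^+2 * (L + P) < L^+3 * (L + P).
  rewrite ltr_pM2r //; have : 0 <= P by rewrite PE; apply: exprn_ge0; lra.
  lra.
have e2 : L^+3 * (L + P) <= P * P.
  rewrite PE; have e : L^+4 = L^+3 * L by ring.
  have L3 : 8 <= L^+3.
    have -> : L^+3 = L*L*L by ring.
    nra.
  rewrite e; nra.
have e3 : P * P <= (L + P - 1)^+2.
  have P0 : 0 <= P by rewrite PE; apply: exprn_ge0; lra.
  rewrite expr2; apply: ler_pM; lra.
lra.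
Qed.
Lemma n2b (R : realType) (L P K : R) : 2 <= L -> 1 <= P -> K = L * P + P + 1 ->
  0 <= (-K) * ((-K - P + 1) * ((-K)*(-K - P + 1) - P)) - (-K - P + 1)^+2 - (L*P) * ((-K)*(-K - P + 1) - P).
Proof.
move=> L2 P1 KE.
have -> : (-K) * ((-K - P + 1) * ((-K)*(-K - P + 1) - P)) - (-K - P + 1)^+2 - (L*P) * ((-K)*(-K - P + 1) - P)
  = (K * (K + P - 1) - L * P) * (K * (K + P - 1) - P) - (K + P - 1) ^+ 2 by ring.
have LP : 0 <= L * P by nra.
have m1 : 1 <= K + P - 1 by lra.
have k1 : 0 <= (K - 1) * (K + P - 1 - 1) by apply: mulr_ge0; lra.
have h1 : K + P - 1 <= K * (K + P - 1) - L * P.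
  rewrite -subr_ge0; have -> : K * (K + P - 1) - L * P - (K + P - 1) = (K - 1) * (K + P - 1 - 1) + P by rewrite KE; ring.
  lra.
have h2 : K + P - 1 <= K * (K + P - 1) - P by nra.
rewrite subr_ge0 expr2; apply: ler_pM; lra.
Qed.
Lemma n3a (R : realType) (L P N : R) : 2 <= L -> P = L^+4 -> N = L^+2 - L + 1 ->
  0 < (-L)^+2 * (-L - P + 1) - ((N - 1) * (-L) * (-L - P + 1) + N * (-L - P + 1) + P * N * (-L)).
Proof.
move=> L2 PE NE.
have -> : (-L)^+2 * (-L - P + 1) - ((N - 1) * (-L) * (-L - P + 1) + N * (-L - P + 1) + P * N * (-L))
  = 2 * (L * L) * (L - 1) + 2 * L - 1 by rewrite PE NE; ring.
have : 0 <= (L * L) * (L - 1) by apply: mulr_ge0; nra.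
lra.
Qed.
Lemma n3b (R : realType) (P N K : R) : 1 <= N -> 1 <= P -> K = N + P ->
  (-K)^+2 * (-K - P + 1) - ((N - 1) * (-K) * (-K - P + 1) + N * (-K - P + 1) + P * N * (-K)) <= 0.
Proof.
move=> N1 P1 KE.
have -> : (-K)^+2 * (-K - P + 1) - ((N - 1) * (-K) * (-K - P + 1) + N * (-K - P + 1) + P * N * (-K))
  = - ((N - 1) * K * (K + P - 1) + N * (K + P - 1) * (K - 1) + K * P * (K + P - 1 - N)) by rewrite KE; ring.
rewrite oppr_le0.
have a1 : 0 <= (N - 1) * K * (K + P - 1) by apply: mulr_ge0; [apply: mulr_ge0|]; lra.
have a2 : 0 <= N * (K + P - 1) * (K - 1) by apply: mulr_ge0; [apply: mulr_ge0|]; lra.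
have a3 : 0 <= K * P * (K + P - 1 - N) by apply: mulr_ge0; [apply: mulr_ge0|]; lra.
lra.
Qed.


Theorem mainTheorem5 :
  forall lam : nat, (2 <= lam)%N ->
  exists p : nat, (0 < p)%N /\
    forall R : realType,
      (exists a : R, is_smallest_eigenvalue (adjmx R _ (graph1_rel lam p)) a
                     /\ a < - (lam%:R)) /\
      (exists a : R, is_smallest_eigenvalue (adjmx R _ (graph2_rel lam p)) a
                     /\ a < - (lam%:R)) /\
      (exists a : R, is_smallest_eigenvalue
                       (adjmx R _ (graph3_rel (lam ^ 2 - lam + 1)%N p)) a
                     /\ a < - (lam%:R)).
Proof.
move=> lam lam2; exists (lam ^ 4)%N; split; first by rewrite expn_gt0 (ltnW lam2).
move=> R.
set p := (lam ^ 4)%N; set L : R := lam%:R.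
have p0 : (0 < p)%N by rewrite expn_gt0 (ltnW lam2).
have L2 : 2 <= L by rewrite /L (ler_nat R 2 lam).
have PE : (p%:R : R) = L ^+ 4 by rewrite natrX.
set P : R := p%:R.
have P1 : 1 <= P by rewrite /P (ler_nat R 1 p).
split; [|split].
- pose q : {poly R} := 'X * ('X - (P - 1)%:P) - ((L + 1) * P)%:P.
  have [th [_ thL qth]] : exists th, [/\ -(L + P + 1) <= th, th < -L & q.[th] = 0].
    apply: ivt_lt; first lra.
      by rewrite /q !hornerE; apply: n1b.
    by rewrite /q !hornerE; apply: n1a.
  move: qth; rewrite /q !hornerE => qth.
  have ev : eigenvalue (adjmx R _ (graph1_rel lam p)) th.
    apply: g1 => //; rewrite natrM -natr1 -/L -/P; lra.
  have [a [Ha ale]] := @smallest_ev R _ _ _ ev.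
  by exists a; split => //; apply: le_lt_trans thL.
- pose T : {poly R} := 'X - P%:P + 1.
  pose q : {poly R} := 'X * (T * ('X * T - P%:P)) - T * T - (L * P)%:P * ('X * T - P%:P).
  have qE x : q.[x] = x * ((x - P + 1) * (x * (x - P + 1) - P)) - (x - P + 1)^+2 - (L * P) * (x * (x - P + 1) - P).
    by rewrite /q /T !hornerE; ring.
  have [th [_ thL qth]] : exists th, [/\ -(L * P + P + 1) <= th, th < -L & q.[th] = 0].
    apply: ivt_lt; first nra.
      by rewrite qE; apply: (@n2b R L P (L * P + P + 1)).
    by rewrite qE; apply: n2a.
  move: qth; rewrite qE => qth.
  have ev : eigenvalue (adjmx R _ (graph2_rel lam p)) th.
    apply: g2 => //.
      rewrite -/P; apply: ltr0_neq0; lra.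
    rewrite -/P natrM -/L -/P; lra.
  have [a [Ha ale]] := @smallest_ev R _ _ _ ev.
  by exists a; split => //; apply: le_lt_trans thL.
- set n := (lam ^ 2 - lam + 1)%N.
  have n0 : (0 < n)%N by rewrite /n addn1.
  have NE : (n%:R : R) = L ^+ 2 - L + 1.
    rewrite /n natrD natrB ?natrX //.
    by rewrite -mulnn leq_pmulr // (ltnW lam2).
  set N : R := n%:R.
  pose T : {poly R} := 'X - P%:P + 1.
  pose q : {poly R} := 'X * 'X * T - ((N - 1)%:P * 'X * T + N%:P * T + (P * N)%:P * 'X).
  have qE x : q.[x] = x^+2 * (x - P + 1) - ((N - 1) * x * (x - P + 1) + N * (x - P + 1) + P * N * x).
    by rewrite /q /T !hornerE; ring.
  have N1 : 1 <= N by rewrite /N NE; nra.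
  have [th [_ thL qth]] : exists th, [/\ -(N + P) <= th, th < -L & q.[th] = 0].
    apply: ivt_gt; first by rewrite /N NE; nra.
      by rewrite qE; apply: n3b.
    by rewrite qE; apply: n3a.
  move: qth; rewrite qE => qth.
  have ev : eigenvalue (adjmx R _ (graph3_rel n p)) th.
    apply: g3 => //.
      apply: ltr0_neq0; lra.
    rewrite -/P -/N; lra.
  have [a [Ha ale]] := @smallest_ev R _ _ _ ev.
  by exists a; split => //; apply: le_lt_trans thL.
Qed.
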